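(* Let $\mathbf{h}=(h_1,\dots,h_p)\subset\mathbb{Z}[X_1,\dots,X_n]$ satisfy assumption $\mathsf{G}$, $V=V(\mathbf{h})$, and let $\delta$ be an upper bound on the cardinality of $W(\pi_1,V)$. Consider the linear forms $u^{(i)}=L_1+iL_2+\cdots+i^{p-1}L_p$ for $i\in\{1,\dots,8(p-1)\delta\}$. Then at least $7/8$ of these linear forms have coefficient vector $\mathbf{u}=(1,i,\dots,i^{p-1})$ satisfying $u_1\ell_{\mathbf{x},1}+\cdots+u_p\ell_{\mathbf{x},p}\ne0$ for every $\mathbf{x}\in W(\pi_1,V)$, where $\boldsymbol{\ell}_{\mathbf{x}}=[\ell_{\mathbf{x},1},\dots,\ell_{\mathbf{x},p}]$ is a nonzero vector in the left nullspace of $\mathrm{jac}_{\mathbf{x}}(\mathbf{h},1)$.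
   Context: $\pi_1(x_1,\dots,x_n)=x_1$; $V(\mathbf{h})\subset\mathbb{C}^n$ the zero-set. $\mathrm{jac}(\mathbf{h})$ is the Jacobian matrix; $\mathrm{jac}(\mathbf{h},1)=(\partial h_i/\partial X_j)_{1\le i\le p,\,2\le j\le n}$. $W(\pi_1,V)$ is the set of points $\mathbf{x}\in V$, not in the singular locus of $V$, with $\pi_1(T_{\mathbf{x}}V)=\{0\}$. For a $(p-1)$-minor $m$ of $\mathrm{jac}(\mathbf{h},1)$, $\mathsf{Minors}(\mathbf{h},m)$ is the vector of $p$-minors obtained by adding the missing row and a missing column to $m$, $\mathcal{O}(m)=\{m\ne0\}$. Assumption $\mathsf{G}$: (1) $\mathrm{jac}(\mathbf{h})$ has rank $p$ on $V$; (2) $\mathrm{jac}(\mathbf{h},1)$ has rank $p-1$ on $W(\pi_1,V)$ (so $\boldsymbol{\ell}_{\mathbf{x}}$ is unique up to scalar); (3) $W(\pi_1,V)$ is finite; (4) for each $(p-1)$-minor $m$, $\mathbf{h},\mathsf{Minors}(\mathbf{h},m)$ define $W(\pi_1,V)$ in $\mathcal{O}(m)$ with Jacobian of rank $n$ on $W(\pi_1,V)\cap\mathcal{O}(m)$. *)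

(* Defs.v *)
From HB Require Import structures.
From mathcomp Require Import all_boot all_order all_algebra.
From mathcomp Require Import mpoly.
Set Implicit Arguments. Unset Strict Implicit. Unset Printing Implicit Defensive.
Import Order.TTheory GRing.Theory Num.Theory.
Local Open Scope ring_scope.

(* Conventions: the paper's ambient dimension n is [n.+1] here: variables are
   X_0 .. X_n (paper: X_1 .. X_{n+1}); pi_1 is the coordinate 0.
   Points of C^{n+1} are row vectors 'rV[C]_(n.+1). *)

Section Defs.
Variables (C : numClosedFieldType) (n p : nat).
Variable h : 'I_p -> {mpoly int[n.+1]}.

Definition hC (i : 'I_p) : {mpoly C[n.+1]} := map_mpoly (fun z : int => z%:~R) (h i).

Definition evalpt (x : 'rV[C]_(n.+1)) (q : {mpoly C[n.+1]}) : C :=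
  q.@[fun k => x ord0 k].

Definition inV (x : 'rV[C]_(n.+1)) : Prop := forall i, evalpt x (hC i) = 0.

Definition jacP : 'M[{mpoly C[n.+1]}]_(p, n.+1) :=
  \matrix_(i, j) (hC i)^`M(j).
Definition jac (x : 'rV[C]_(n.+1)) : 'M[C]_(p, n.+1) :=
  \matrix_(i, j) evalpt x (jacP i j).

Definition jac1P : 'M[{mpoly C[n.+1]}]_(p, n) :=
  \matrix_(i, j) (hC i)^`M(lift ord0 j).
Definition jac1 (x : 'rV[C]_(n.+1)) : 'M[C]_(p, n) :=
  \matrix_(i, j) evalpt x (jac1P i j).

(* W(pi_1, V): nonsingular points of V (Jacobian criterion: jac(h) has
   rank p there, and then T_x V = ker jac_x(h)) at which pi_1(T_x V) = 0. *)
Definition inW (x : 'rV[C]_(n.+1)) : Prop :=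
  inV x /\ \rank (jac x) = p /\
  (forall v : 'cV[C]_(n.+1), jac x *m v = 0 -> v ord0 ord0 = 0).

End Defs.

(* The minor of M with row set Rs and column set Cs (rows/columns in
   increasing order); 0 if the sets have different cardinalities. *)
Definition setminor (R : comNzRingType) (a b : nat) (M : 'M[R]_(a, b))
    (Rs : {set 'I_a}) (Cs : {set 'I_b}) : R :=
  match #|Cs| =P #|Rs| with
  | ReflectT e => \det (\matrix_(i, j) M (enum_val i) (enum_val (cast_ord (esym e) j)))
  | ReflectF _ => 0
  end.

Section Minors.
Variables (C : numClosedFieldType) (n p : nat).
Variable h : 'I_p -> {mpoly int[n.+1]}.

Definition minorP (Rs : {set 'I_p}) (Cs : {set 'I_n}) : {mpoly C[n.+1]} :=
  setminor (jac1P C h) Rs Cs.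

(* Minors(h, m): the p-minors obtained by adding the missing row and the
   missing column c (c ranges over the columns not in Cs) *)
Definition bigminorP (Cs : {set 'I_n}) (c : 'I_n) : {mpoly C[n.+1]} :=
  setminor (jac1P C h) setT (c |: Cs).

Definition sysjac (Cs : {set 'I_n}) (x : 'rV[C]_(n.+1))
    : 'M[C]_(p + #|~: Cs|, n.+1) :=
  col_mx (jac h x)
    (\matrix_(k, j) evalpt x ((bigminorP Cs (enum_val k))^`M(j))).

End Minors.

Definition assumptionG (C : numClosedFieldType) (n p : nat)
    (h : 'I_p -> {mpoly int[n.+1]}) : Prop :=
  (forall x : 'rV[C]_(n.+1), inV h x -> \rank (jac h x) = p) /\
  (forall x : 'rV[C]_(n.+1), inW h x -> \rank (jac1 h x) = p.-1) /\
  (exists s : seq 'rV[C]_(n.+1), forall x, inW h x -> x \in s) /\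
  (forall (Rs : {set 'I_p}) (Cs : {set 'I_n}),
       #|Rs| = p.-1 -> #|Cs| = p.-1 ->
       (forall x : 'rV[C]_(n.+1), evalpt x (minorP C h Rs Cs) != 0 ->
          (inW h x <->
           (inV h x /\ forall c, c \notin Cs -> evalpt x (bigminorP C h Cs c) = 0))) /\
       (forall x : 'rV[C]_(n.+1), inW h x -> evalpt x (minorP C h Rs Cs) != 0 ->
          \rank (sysjac h Cs x) = n.+1)).

(* Main.v *)
Require Import Defs.
From HB Require Import structures.
From mathcomp Require Import all_boot all_order all_algebra.
From mathcomp Require Import mpoly.
From mathcomp Require Import zify ring.
From Stdlib Require Import ClassicalEpsilon.
Import Order.TTheory GRing.Theory Num.Theory.
Local Open Scope ring_scope.

Definition asb (P : Prop) : bool :=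
  if excluded_middle_informative P then true else false.
Lemma asbP P : reflect P (asb P).
Proof. by rewrite /asb; case: excluded_middle_informative => H; constructor. Qed.

Lemma sumn_bound (T : eqType) (f : T -> nat) (k : nat) (W : seq T) :
  (forall x, x \in W -> (f x <= k)%N) -> (sumn (map f W) <= k * size W)%N.
Proof.
elim: W => [|x W IH] //= H.
have := H x (mem_head _ _).
have := IH (fun y yW => H y (@mem_behead _ (x :: W) y yW)).
move=> a b; rewrite mulnS; exact: leq_add.
Qed.

Lemma bad_bound (C : numClosedFieldType) (p n : nat) (A : 'M[C]_(p,n)) (r : seq nat) :
  \rank A = p.-1 -> uniq r ->
  (forall i, i \in r -> exists2 l : 'rV[C]_p, l != 0 &
      l *m A = 0 /\ \sum_(j<p) (i%:R ^+ j) * l ord0 j = 0) ->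
  (size r <= p.-1)%N.
Proof.
move=> rA ur H.
case: r ur H => [//|i0 r'] ur H.
have [l1 l1n0 [l1A _]] := H i0 (mem_head _ _).
case: p A rA H l1 l1n0 l1A => [|p] A rA H l1 l1n0 l1A.
  by move: l1n0; rewrite (thinmx0 l1) eqxx.
set q := \poly_(j < p.+1) l1 ord0 (inord j).
have qn0 : q != 0.
  apply: contra l1n0 => /eqP q0; apply/eqP/rowP => j.
  rewrite mxE.
  have := congr1 (fun r : {poly C} => r`_j) q0.
  rewrite coef_poly ltn_ord coef0 => <-.
  by congr (l1 _ _); apply: val_inj; rewrite /= inordK.
have sq : (size q <= p.+1)%N by apply: size_poly.
have K1 : (\rank (kermx A) <= \rank l1)%N.
  rewrite mxrank_ker rA.
  have : \rank l1 != 0%N by rewrite mxrank_eq0.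
  by case: (\rank l1) => // k _; rewrite /=; lia.
have l1K : (l1 <= kermx A)%MS by rewrite sub_kermx l1A.
have Kl1 : (kermx A <= l1)%MS.
  by have [_ <-] := mxrank_leqif_sup l1K; apply/eqP; apply/anti_leq; rewrite K1 mxrank_leqif_sup.
have roots : all (root q) [seq i%:R | i <- i0 :: r'].
  apply/allP => _ /mapP [i ir ->].
  have [l ln0 [lA ls]] := H i ir.
  have : (l <= l1)%MS.
    by apply: submx_trans Kl1; rewrite sub_kermx lA.
  case/submxP => D lD.
  have lE j : l ord0 j = D ord0 ord0 * l1 ord0 j.
    by rewrite lD mxE big_ord1.
  have D0 : D ord0 ord0 != 0.
    apply: contra ln0 => /eqP D0; apply/eqP/rowP => j.
    by rewrite lE D0 mul0r mxE.
  apply/rootP; rewrite horner_poly.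
  have : D ord0 ord0 * \sum_(j < p.+1) l1 ord0 (inord j) * i%:R ^+ j = 0.
    rewrite mulr_sumr -[RHS]ls; apply: eq_bigr => j _; rewrite lE inord_val; ring.
  by move/eqP; rewrite mulf_eq0 (negbTE D0) /= => /eqP.
have uq : uniq ([seq i%:R | i <- i0 :: r'] : seq C).
  rewrite map_inj_uniq // => a b /eqP; rewrite eqr_nat => /eqP.
  done.
have := max_poly_roots qn0 roots uq.
rewrite size_map => lt.
by rewrite /= -ltnS (leq_trans lt sq).
Qed.

Theorem proposition5p4 (C : numClosedFieldType) (n p : nat)
    (h : 'I_p -> {mpoly int[n.+1]}) (delta : nat) :
  assumptionG C h ->
  (forall s : seq 'rV[C]_(n.+1), uniq s -> (forall x, x \in s -> inW h x) ->
     (size s <= delta)%N) ->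
  exists good : seq nat,
    [/\ uniq good,
        (forall i, i \in good -> (1 <= i <= 8 * p.-1 * delta)%N),
        (forall i, i \in good ->
           forall x : 'rV[C]_(n.+1), inW h x ->
           forall l : 'rV[C]_p, l != 0 -> l *m jac1 h x = 0 ->
             \sum_(j < p) (i%:R ^+ j) * l ord0 j != 0)
      & (7 * (8 * p.-1 * delta) <= 8 * size good)%N].
Proof.
move=> [G1 [G2 [[s Hs] _]]] Hdelta.
set N := (8 * p.-1 * delta)%N.
pose badx x (i : nat) := exists2 l : 'rV[C]_p, l != 0 &
      l *m jac1 h x = 0 /\ \sum_(j < p) (i%:R ^+ j) * l ord0 j = 0.
pose goodP (i : nat) := forall x : 'rV[C]_(n.+1), inW h x ->
           forall l : 'rV[C]_p, l != 0 -> l *m jac1 h x = 0 ->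
             \sum_(j < p) (i%:R ^+ j) * l ord0 j != 0.
exists [seq i <- iota 1 N | asb (goodP i)].
split.
- by apply: filter_uniq; apply: iota_uniq.
- by move=> i; rewrite mem_filter mem_iota => /andP [_ /andP[a b]]; lia.
- by move=> i; rewrite mem_filter => /andP [/asbP g _].
set W := undup [seq x <- s | asb (inW h x)].
have WW x : x \in W -> inW h x by rewrite mem_undup mem_filter => /andP[/asbP].
have sW : (size W <= delta)%N by apply: Hdelta => //; apply: undup_uniq.
pose B x := [seq i <- iota 1 N | asb (badx x i)].
set F := flatten [seq B x | x <- W].
set bad := [seq i <- iota 1 N | ~~ asb (goodP i)].
have sub : {subset bad <= F}.
  move=> i; rewrite mem_filter => /andP [ng iN].
  case: (boolP (i \in F)) => // niF.
  case/negP: ng; apply/asbP => x Wx l ln0 lA; apply/eqP => s0.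
  case/negP: niF; apply/flattenP; exists (B x).
    apply/mapP; exists x => //.
    by rewrite mem_undup mem_filter Hs // andbT; apply/asbP.
  by rewrite mem_filter iN andbT; apply/asbP; exists l.
have sbad : (size bad <= size F)%N.
  by apply: uniq_leq_size => //; apply: filter_uniq; apply: iota_uniq.
have sF : (size F <= p.-1 * size W)%N.
  rewrite size_flatten /shape -map_comp; apply: sumn_bound => x Wx /=.
  apply: (@bad_bound C p n (jac1 h x)); first by apply: G2; apply: WW.
    by apply: filter_uniq; apply: iota_uniq.
  by move=> i; rewrite mem_filter => /andP [/asbP].
have tot : (size [seq i <- iota 1 N | asb (goodP i)] + size bad = N)%N.
  by rewrite !size_filter count_predC size_iota.
have pW : (p.-1 * size W <= p.-1 * delta)%N by apply: leq_mul.
have NE : N = (8 * (p.-1 * delta))%N by rewrite /N mulnA.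
move: tot sbad sF pW NE.
set a := size _; set b := size bad; set c := size F; set m := (p.-1 * delta)%N.
set d := (p.-1 * size W)%N.
lia.
Qed.
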